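(* Consider an $L$-layer network in which, at every layer $i=l,\dots,L$, the activation $X_i$ is passed through a signed $B$-bit clipped quantizer $\mathbb{Q}_i$ with clipping scalar $s_i$ satisfying $\Pr(|X_i|>s_i)>0$. Let $\Delta X_l$ be the true gradient of the loss with respect to $X_l$ and $\Delta^{(\mathrm{STE})}X_l$ its estimate when each $\partial\mathbb{Q}_i(x)/\partial x$ is replaced by the straight-through estimate $1$. Then there exists $\delta>0$ such that $$\frac{\mathrm{Var}\left(\Delta^{(\mathrm{STE})}X_l\right)}{\mathrm{Var}\left(\Delta X_l\right)}\ge(1+\delta)^{L-l}.$$
   Context: The clipped quantizer is $\mathbb{Q}(x)=\mathrm{clip}\big(s\cdot2^{1-B}\,\mathrm{round}(x\,2^{B-1}/s),-s,s\big)$, i.e. equal to $-s$ for $x<-s$, to $s$ for $x>s$, and to the nearest of the equally spaced levels in between otherwise. Its true derivative is taken to be $1$ on the discretization region $|x|\le s$ (small step approximation) and $0$ on the clipping region $|x|>s$. Gradient variances are computed in a second-order back-propagation model: the variance of the back-propagated gradient at layer $l$ equals a common factor times $\prod_{i=l}^{L}\mathbb{E}\big[|g_i(X_i)|^2\big]$, where $g_i$ is the derivative (true or estimated) used for the quantizer at layer $i$. *)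

(* Defs.v *)
From HB Require Import structures.
From mathcomp Require Import all_boot all_order all_algebra.
From mathcomp Require Import all_classical all_reals all_analysis.
Set Implicit Arguments. Unset Strict Implicit. Unset Printing Implicit Defensive.
Import Order.TTheory GRing.Theory Num.Theory.
Local Open Scope ring_scope.

(* Signed B-bit clipped quantizer with clipping scalar s:
   Q(x) = clip(s 2^(1-B) round(x 2^(B-1)/s), -s, s), round y := floor(y + 1/2).
   (Included for documentation; the second-order model only uses its derivative.) *)
Definition clipq {R : realType} (B : nat) (s x : R) : R :=
  let y := s / 2 ^+ B.-1 * (Num.floor (x * 2 ^+ B.-1 / s + 2^-1))%:~R in
  Num.max (- s) (Num.min s y).

(* True derivative of the clipped quantizer (small step approximation):
   1 on the discretization region |x| <= s, 0 on the clipping region |x| > s. *)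
Definition dQ_true {R : realType} (s : R) (x : R) : R :=
  if `|x| <= s then 1 else 0.

Definition dQ_ste {R : realType} (s : R) (x : R) : R := 1.

Definition sqmoment {d} {T : measurableType d} {R : realType}
  (P : probability T R) (g : R -> R) (X : T -> R) : R :=
  fine ('E_P[fun w => (`|g (X w)| ^+ 2)%R])%E.

(* Second-order back-propagation model: the variance of the back-propagated
   gradient at layer l is  C * prod_{i=l}^{L} E[|g_i(X_i)|^2],
   where at layer i the quantizer derivative is  dQ s_i. *)
Definition grad_var {d} {T : measurableType d} {R : realType}
  (P : probability T R) (C : R) (dQ : R -> R -> R) (s : nat -> R)
  (X : nat -> T -> R) (l L : nat) : R :=
  C * \prod_(l <= i < L.+1) sqmoment P (dQ (s i)) (X i).

(* Main.v *)
Require Import Defs.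
From HB Require Import structures.
From mathcomp Require Import all_boot all_order all_algebra.
From mathcomp Require Import all_classical all_reals all_analysis.
Import Order.TTheory GRing.Theory Num.Theory.
Local Open Scope ring_scope.

Lemma sq_ste d (T : measurableType d) (R : realType) (P : probability T R)
  (X : {RV P >-> R}) (s : R) : sqmoment P (dQ_ste s) X = 1.
Proof.
rewrite /sqmoment /dQ_ste.
set F := (fun w : T => _ ^+ 2).
have -> : F = cst 1 by apply/funext => w; rewrite /F normr1 expr1n.
by rewrite expectation_cst.
Qed.

Lemma sq_true d (T : measurableType d) (R : realType) (P : probability T R)
  (X : {RV P >-> R}) (s : R) :
  (0 < P [set w : T | (s < `|X w|)%R]%classic)%E ->
  0 <= sqmoment P (dQ_true s) X < 1.
Proof.
move=> HP.
set B := [set w : T | (s < `|X w|)%R]%classic.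
have mB : measurable B.
  have mX : measurable_fun setT (X : T -> R) by apply: measurable_funPT.
  have mf := measurableT_comp (@measurable_realfun.normr_measurable R setT) mX.
  have := mf measurableT (`]s, +oo[%classic) (measurable_itv _).
  rewrite setTI; congr measurable; apply/funext => w /=.
  by rewrite /B /= in_itv /= andbT.
rewrite /sqmoment.
set F := (fun w : T => _ ^+ 2).
have -> : F = \1_(~` B)%classic.
  apply/funext => w; rewrite indicE /dQ_true /B.
  have -> : (w \in ~` B)%classic = (`|X w| <= s).
    apply/idP/idP; rewrite in_setC /B /= notin_setE /=.
      by move=> h; rewrite leNgt; apply/negP.
    by rewrite leNgt => /negP.
  rewrite /F /dQ_true; case: ifP => _ /=.
    by rewrite normr1 expr1n.
  by rewrite normr0 expr2 mulr0.
rewrite expectation_indic; last exact: measurableC.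
rewrite probability_setC //.
have hle := probability_le1 P mB.
have /fineK hB := @fin_num_measure _ _ _ P B mB.
move: hle HP; rewrite -/B -hB; set r := fine (P B).
rewrite lee_fin lte_fin -EFinB /= => h1 h0.
apply/andP; split; first by rewrite subr_ge0.
by rewrite ltrBlDr ltrDl.
Qed.

Lemma common_bound (R : realFieldType) (f : nat -> R) l n :
  (forall i, (l <= i <= l + n)%N -> f i < 1) ->
  exists q, 0 < q < 1 /\ forall i, (l <= i <= l + n)%N -> f i <= q.
Proof.
elim: n => [|n IH] H.
  exists (Num.max 2^-1 (f l)); split.
    rewrite lt_max invr_gt0 ltr0n /= gt_max invf_lt1 ?ltr0n ?ltr1n //=.
    by apply: H; rewrite addn0 leqnn.
  move=> i; rewrite addn0 -eqn_leq => /eqP <-.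
  by rewrite le_max lexx orbT.
have [q [/andP [q0 q1] Hq]] : exists q, 0 < q < 1 /\ forall i, (l <= i <= l + n)%N -> f i <= q.
  apply: IH => i /andP [h1 h2]; apply: H; rewrite h1 /=; rewrite addnS; exact: leqW.
exists (Num.max q (f (l + n.+1)%N)); split.
  rewrite lt_max q0 /= gt_max q1 /=; apply: H; rewrite leq_addr leqnn //.
move=> i /andP [h1 h2].
rewrite le_max; move: h2; rewrite leq_eqVlt => /orP [/eqP ->|h2].
  by rewrite lexx orbT.
by rewrite Hq // h1 /= -ltnS -addnS.
Qed.

Theorem proposition1 (d : measure_display) (T : measurableType d) (R : realType)
  (P : probability T R) (X : nat -> {RV P >-> R}) (s : nat -> R) (C : R)
  (l L : nat) :
  (l <= L)%N ->
  0 < C ->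
  (forall i, (l <= i <= L)%N -> (0 < P [set w : T | (s i < `|X i w|)%R]%classic)%E) ->
  0 < grad_var P C dQ_true s (fun i => X i : T -> R) l L ->
  exists delta : R, 0 < delta /\
    (1 + delta) ^+ (L - l) <=
      grad_var P C dQ_ste s (fun i => X i : T -> R) l L
      / grad_var P C dQ_true s (fun i => X i : T -> R) l L.
Proof.
move=> hlL C0 HP.
rewrite /grad_var.
set Pi := \prod_(l <= i < L.+1) sqmoment P (dQ_true (s i)) (X i).
move=> HPi.
have Pi0 : 0 < Pi by move: HPi; rewrite pmulr_rgt0.
have -> : \prod_(l <= i < L.+1) sqmoment P (dQ_ste (s i)) (X i) = 1.
  by apply: big1 => i _; apply: sq_ste.
have hL : L = (l + (L - l))%N by rewrite subnKC.
have [q [/andP [q0 q1] Hq]] :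
    exists q, 0 < q < 1 /\ forall i, (l <= i <= l + (L - l))%N ->
      sqmoment P (dQ_true (s i)) (X i) <= q.
  apply: common_bound => i hi.
  rewrite -hL in hi.
  by case/andP: (@sq_true _ _ _ P (X i) (s i) (HP i hi)).
exists (q^-1 - 1); split; first by rewrite subr_gt0 invf_gt1.
rewrite addrC subrK mulr1 invfM mulrA mulfV ?gt_eqF // mul1r exprVn.
rewrite lef_pV2 ?posrE ?exprn_gt0 //.
apply: (@le_trans _ _ (\prod_(l <= i < L.+1) q)).
  rewrite /Pi big_nat_cond [X in _ <= X]big_nat_cond.
  apply: ler_prod => i /andP [/andP [h1 h2] _].
  have hi : (l <= i <= L)%N by rewrite h1 -ltnS.
  have /andP [-> _] := @sq_true _ _ _ P (X i) (s i) (HP i hi).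
  by apply: Hq; rewrite -hL.
rewrite prodr_const_nat subSn // exprS ler_piMl ?exprn_ge0 ?ltW //.
Qed.
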